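(* Let $(X,\beta)$ be a locally finite prechart. For all $x,y\in X$, $\mathsf{bd}_\beta(x,y)=\inf_{i\in\mathbb{N}}\Phi^{(i)}_\beta(x,y)$, where $\Phi^{(0)}_\beta$ is the discrete pseudometric on $X$ and $\Phi^{(i+1)}_\beta=\Phi_\beta(\Phi^{(i)}_\beta)$.
   Context: Fix a set $V=\{v_1,v_2,\dots\}$ of variables and a set $\Sigma$ of letters. A prechart is a pair $(X,\beta)$ with $\beta:X\to P_{\mathrm{fin}}(\Sigma\times X+V)$; write $x\xrightarrow{a}x'$ iff $(a,x')\in\beta(x)$. It is locally finite if from each state only finitely many states are reachable by transitions. A 1-bounded pseudometric on $X$ is $d:X\times X\to[0,1]$ with $d(x,x)=0$, symmetry and triangle inequality; $D_X$ is the set of these, ordered pointwise. The discrete pseudometric is $\top(x,y)=0$ if $x=y$ and $1$ otherwise. For $d\in D_X$, $d^\uparrow$ on $\Sigma\times X+V$ is $d^\uparrow((a,x),(a,y))=\tfrac12 d(x,y)$, $d^\uparrow(m,n)=0$ if $m=n$, $1$ otherwise. $\mathcal H(d)(A,B)=\max\{\sup_{x\in A}\inf_{y\in B}d(x,y),\sup_{y\in B}\inf_{x\in A}d(y,x)\}$ with $\sup\emptyset=0$, $\inf\emptyset=1$. $\Phi_\beta(d)(x,y)=\mathcal H(d^\uparrow)(\beta(x),\beta(y))$, a monotone map on $D_X$; $\mathsf{bd}_\beta$ is its least fixpoint. *)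

(* Defs.v *)
From mathcomp Require Import all_boot all_order all_algebra.
From mathcomp Require Import all_classical all_reals.
From Stdlib Require List.
Set Implicit Arguments. Unset Strict Implicit. Unset Printing Implicit Defensive.
Import Order.TTheory GRing.Theory Num.Theory.
Local Open Scope classical_set_scope.
Local Open Scope ring_scope.

(* Variables V = {v_1, v_2, ...} are represented by nat.
   A prechart: beta : X -> P_fin(Sigma * X + V); finite sets as lists. *)
Definition prechart (Sigma X : Type) := X -> seq ((Sigma * X) + nat).

Definition step (Sigma X : Type) (beta : prechart Sigma X) (x x' : X) : Prop :=
  exists a : Sigma, List.In (inl (a, x')) (beta x).

Inductive reach (Sigma X : Type) (beta : prechart Sigma X) : X -> X -> Prop :=
| reach_refl x : reach beta x x
| reach_step x y z : step beta x y -> reach beta y z -> reach beta x z.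

Definition locally_finite (Sigma X : Type) (beta : prechart Sigma X) : Prop :=
  forall x : X, finite_set [set y | reach beta x y].

Definition is_pmetric (R : realType) (X : Type) (d : X -> X -> R) : Prop :=
  [/\ forall x y, 0 <= d x y <= 1,
      forall x, d x x = 0,
      forall x y, d x y = d y x &
      forall x y z, d x z <= d x y + d y z].

Definition discrete_pm (R : realType) (X : Type) : X -> X -> R :=
  fun x y => if pselect (x = y) then 0 else 1.

Definition lift_pm (R : realType) (Sigma X : Type) (d : X -> X -> R)
    (m n : (Sigma * X) + nat) : R :=
  match m, n with
  | inl (a, x), inl (b, y) => if pselect (a = b) then d x y / 2 else 1
  | inr v, inr w => if pselect (v = w) then 0 else 1
  | _, _ => 1
  end.

(* Hausdorff lifting on finite sets (lists), sup of empty = 0, inf of empty = 1 *)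
Definition hausdorff (R : realType) (T : Type) (e : T -> T -> R)
    (A B : seq T) : R :=
  Num.max (\big[Num.max/0]_(a <- A) \big[Num.min/1]_(b <- B) e a b)
          (\big[Num.max/0]_(b <- B) \big[Num.min/1]_(a <- A) e b a).

Definition Phi (R : realType) (Sigma X : Type) (beta : prechart Sigma X)
    (d : X -> X -> R) : X -> X -> R :=
  fun x y => hausdorff (lift_pm d) (beta x) (beta y).

Definition Phi_iter (R : realType) (Sigma X : Type) (beta : prechart Sigma X)
    (i : nat) : X -> X -> R :=
  iter i (Phi beta) (@discrete_pm R X).

Definition is_bd (R : realType) (Sigma X : Type) (beta : prechart Sigma X)
    (d : X -> X -> R) : Prop :=
  [/\ is_pmetric d, Phi beta d = d &
      forall d' : X -> X -> R, is_pmetric d' -> Phi beta d' = d' ->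
        forall x y, d x y <= d' x y].

(* Main.v *)
Require Import Defs.
From mathcomp Require Import all_boot all_order all_algebra.
From mathcomp Require Import all_classical all_reals.
From mathcomp Require Import lra.
Set Implicit Arguments. Unset Strict Implicit. Unset Printing Implicit Defensive.
Import Order.TTheory GRing.Theory Num.Theory.
Local Open Scope classical_set_scope.
Local Open Scope ring_scope.

Section H.
Variable R : realType.

Definition close (k : R) (u v : R) := u - v <= k /\ v - u <= k.

Lemma close_max k a b c d : close k a c -> close k b d ->
  close k (Num.max a b) (Num.max c d).
Proof.
rewrite /close => -[h1 h2] [h3 h4].
by have [hab|hab] := leP a b; have [hcd|hcd] := leP c d; split; lra.
Qed.

Lemma close_min k a b c d : close k a c -> close k b d ->
  close k (Num.min a b) (Num.min c d).
Proof.
rewrite /close => -[h1 h2] [h3 h4].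
by have [hab|hab] := leP a b; have [hcd|hcd] := leP c d; split; lra.
Qed.

Lemma close_refl k u : 0 <= k -> close k u u.
Proof. by rewrite /close subrr. Qed.

Lemma close_haus (T : Type) k (e e' : T -> T -> R) A B : 0 <= k ->
  (forall a b, close k (e a b) (e' a b)) ->
  close k (hausdorff e A B) (hausdorff e' A B).
Proof.
move=> k0 he; rewrite /hausdorff; apply: close_max;
  (apply: (big_ind2 (close k)); [exact: close_refl| by move=> ? ? ? ? h1 h2; exact: (close_max h1 h2)| ];
  move=> i _; apply: (big_ind2 (close k)); [exact: close_refl| by move=> ? ? ? ? h1 h2; exact: (close_min h1 h2)| by []]).
Qed.

Lemma mono_haus (T : Type) (e e' : T -> T -> R) A B :
  (forall a b, e a b <= e' a b) ->
  hausdorff e A B <= hausdorff e' A B.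
Proof.
have hmx (a b c d : R) : a <= c -> b <= d -> Num.max a b <= Num.max c d.
  by move=> *; have [hab|hab] := leP a b; have [hcd|hcd] := leP c d; lra.
have hmn (a b c d : R) : a <= c -> b <= d -> Num.min a b <= Num.min c d.
  by move=> *; have [hab|hab] := leP a b; have [hcd|hcd] := leP c d; lra.
move=> he; rewrite /hausdorff; apply: (hmx);
  (apply: (big_ind2 (fun u v => u <= v)); [by []| by move=> ? ? ? ? h1 h2; exact: (hmx _ _ _ _ h1 h2)| ];
  move=> i _; apply: (big_ind2 (fun u v => u <= v)); [by []| by move=> ? ? ? ? h1 h2; exact: (hmn _ _ _ _ h1 h2)| by []]).
Qed.


Lemma bigmin_le1 (T : Type) (f : T -> R) B : \big[Num.min/1]_(b <- B) f b <= 1.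
Proof.
elim: B => [|b B IH]; rewrite ?big_nil ?big_cons //.
by have [h|h] := leP (f b) (\big[Num.min/1]_(j <- B) f j); lra.
Qed.

Lemma bigmax_ge0 (T : Type) (f : T -> R) B : 0 <= \big[Num.max/0]_(b <- B) f b.
Proof.
elim: B => [|b B IH]; rewrite ?big_nil ?big_cons //.
by have [h|h] := leP (f b) (\big[Num.max/0]_(j <- B) f j); lra.
Qed.

Lemma bigmin_le (T : Type) (f : T -> R) B b : List.In b B ->
  \big[Num.min/1]_(j <- B) f j <= f b.
Proof.
elim: B => [|c B IH] //= [->|/IH h]; rewrite big_cons.
  by have [h|h] := leP (f b) (\big[Num.min/1]_(j <- B) f j); lra.
by have [h'|h'] := leP (f c) (\big[Num.min/1]_(j <- B) f j); lra.
Qed.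

Lemma le_bigmax (T : Type) (f : T -> R) B b : List.In b B ->
  f b <= \big[Num.max/0]_(j <- B) f j.
Proof.
elim: B => [|c B IH] //= [->|/IH h]; rewrite big_cons.
  by have [h|h] := leP (f b) (\big[Num.max/0]_(j <- B) f j); lra.
by have [h'|h'] := leP (f c) (\big[Num.max/0]_(j <- B) f j); lra.
Qed.

Lemma bigmin_glb (T : Type) (f : T -> R) B x : x <= 1 ->
  (forall b, List.In b B -> x <= f b) -> x <= \big[Num.min/1]_(j <- B) f j.
Proof.
move=> x1; elim: B => [|c B IH] hb; rewrite ?big_nil ?big_cons //.
have h1 := hb c (or_introl erefl).
have h2 : x <= \big[Num.min/1]_(j <- B) f j by apply: IH => b hb'; apply: hb; right.
by have [h|h] := leP (f c) (\big[Num.min/1]_(j <- B) f j); lra.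
Qed.

Lemma bigmax_lub (T : Type) (f : T -> R) B x : 0 <= x ->
  (forall b, List.In b B -> f b <= x) -> \big[Num.max/0]_(j <- B) f j <= x.
Proof.
move=> x1; elim: B => [|c B IH] hb; rewrite ?big_nil ?big_cons //.
have h1 := hb c (or_introl erefl).
have h2 : \big[Num.max/0]_(j <- B) f j <= x by apply: IH => b hb'; apply: hb; right.
by have [h|h] := leP (f c) (\big[Num.max/0]_(j <- B) f j); lra.
Qed.

Lemma haus_key (T : Type) (e : T -> T -> R) A B C :
  (forall x y, 0 <= e x y) -> (forall x y z, e x z <= e x y + e y z) ->
  \big[Num.max/0]_(a <- A) \big[Num.min/1]_(c <- C) e a c <=
  \big[Num.max/0]_(a <- A) \big[Num.min/1]_(b <- B) e a b +
  \big[Num.max/0]_(b <- B) \big[Num.min/1]_(c <- C) e b c.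
Proof.
move=> e0 tri.
set M1 := \big[Num.max/0]_(a <- A) \big[Num.min/1]_(b <- B) e a b.
set M2 := \big[Num.max/0]_(b <- B) \big[Num.min/1]_(c <- C) e b c.
have M10 : 0 <= M1 by apply: bigmax_ge0.
have M20 : 0 <= M2 by apply: bigmax_ge0.
apply: bigmax_lub; first lra.
move=> a aA.
set m := \big[Num.min/1]_(c <- C) e a c.
have m1 : m <= 1 by apply: bigmin_le1.
have : m - M2 <= \big[Num.min/1]_(b <- B) e a b.
  apply: bigmin_glb; first lra.
  move=> b bB.
  have hb : \big[Num.min/1]_(c <- C) e b c <= M2 by apply: (le_bigmax (fun b => \big[Num.min/1]_(c <- C) e b c)).
  have : m - e a b <= \big[Num.min/1]_(c <- C) e b c.
    apply: bigmin_glb; first by have := e0 a b; lra.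
    move=> c cC; have := bigmin_le (e a) cC; have := tri a b c; rewrite -/m; lra.
  lra.
have : \big[Num.min/1]_(b <- B) e a b <= M1 by apply: (le_bigmax (fun a => \big[Num.min/1]_(b <- B) e a b)).
lra.
Qed.

Lemma haus_tri (T : Type) (e : T -> T -> R) A B C :
  (forall x y, 0 <= e x y) -> (forall x y z, e x z <= e x y + e y z) ->
  hausdorff e A C <= hausdorff e A B + hausdorff e B C.
Proof.
move=> e0 tri; rewrite /hausdorff.
have k1 := haus_key A B C e0 tri.
have k2 := haus_key C B A e0 tri.
set P1 := \big[Num.max/0]_(a <- A) \big[Num.min/1]_(b <- B) e a b in k1 k2 *.
set P2 := \big[Num.max/0]_(b <- B) \big[Num.min/1]_(a <- A) e b a in k1 k2 *.
set Q1 := \big[Num.max/0]_(b <- B) \big[Num.min/1]_(c <- C) e b c in k1 k2 *.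
set Q2 := \big[Num.max/0]_(c <- C) \big[Num.min/1]_(b <- B) e c b in k1 k2 *.
set S1 := \big[Num.max/0]_(a <- A) \big[Num.min/1]_(c <- C) e a c in k1 k2 *.
set S2 := \big[Num.max/0]_(c <- C) \big[Num.min/1]_(a <- A) e c a in k1 k2 *.
have [h|h] := leP S1 S2; have [h'|h'] := leP P1 P2; have [h''|h''] := leP Q1 Q2; lra.
Qed.


Definition bnd (X : Type) (d : X -> X -> R) := forall x y, 0 <= d x y <= 1.
Definition tri (X : Type) (d : X -> X -> R) := forall x y z, d x z <= d x y + d y z.


End H.

Section L.
Variable R : realType.
Lemma lift_close (Sigma X : Type) k (d d' : X -> X -> R) : 0 <= k ->
  (forall x y, close k (d x y) (d' x y)) ->
  forall m n : (Sigma * X) + nat, close (k / 2) (lift_pm d m n) (lift_pm d' m n).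
Proof.
move=> k0 h [[a x]|v] [[b y]|w] /=; try (case: pselect => ? /=); try (apply: close_refl; lra).
by have [h1 h2] := h x y; split; lra.
Qed.

Lemma lift_mono (Sigma X : Type) (d d' : X -> X -> R) :
  (forall x y, d x y <= d' x y) ->
  forall m n : (Sigma * X) + nat, lift_pm d m n <= lift_pm d' m n.
Proof.
move=> h [[a x]|v] [[b y]|w] /=; try (case: pselect => ? /=); try lra.
by have := h x y; lra.
Qed.

Lemma lift_bnd (Sigma X : Type) (d : X -> X -> R) : bnd d ->
  bnd (@lift_pm R Sigma X d).
Proof.
move=> h [[a x]|v] [[b y]|w] /=; try (case: pselect => ? /=) => //; try (apply/andP; split; lra).
by have /andP[? ?] := h x y; apply/andP; split; lra.
Qed.

Lemma lift_tri (Sigma X : Type) (d : X -> X -> R) : bnd d -> tri d ->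
  tri (@lift_pm R Sigma X d).
Proof.
move=> hb ht [[a x]|v] [[b y]|w] [[c z]|u] /=;
  repeat (case: pselect => ? /=; subst); try congruence;
  try (have /andP[? ?] := hb x y); try (have /andP[? ?] := hb y z);
  try (have /andP[? ?] := hb x z); try (have := ht x y z); lra.
Qed.
End L.

Section M.
Variable R : realType.

Definition g (n : nat) : R := (2 ^+ n)^-1.

Lemma g_ge0 n : 0 <= g n.
Proof. by rewrite /g invr_ge0 exprn_ge0. Qed.

Lemma gS n : g n.+1 = g n / 2.
Proof. by rewrite /g exprS invfM mulrC. Qed.

Lemma geo (r : R) : (forall n, r <= g n) -> r <= 0.
Proof.
move=> h; rewrite leNgt; apply/negP => r0.
have := @archi_boundP R (r^-1); rewrite invr_ge0 ltW // => /(_ isT) hb.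
set n := Num.bound _ in hb.
have hn : (n%:R : R) < 2 ^+ n by rewrite -natrX ltr_nat ltn_expl.
have := h n; rewrite /g => hr.
set t := 2 ^+ n in hn hr.
have t0 : 0 < t by rewrite /t exprn_gt0.
have e1 : t * t^-1 = 1 by rewrite mulfV // gt_eqF.
have e2 : r^-1 * r = 1 by rewrite mulVf // gt_eqF.
nra.
Qed.

Lemma haus_bnd (T : Type) (e : T -> T -> R) A B : bnd e ->
  0 <= hausdorff e A B <= 1.
Proof.
move=> he; rewrite /hausdorff.
have mx (a b : R) : 0 <= a <= 1 -> 0 <= b <= 1 -> 0 <= Num.max a b <= 1.
  by move=> /andP[? ?] /andP[? ?]; have [h|h] := leP a b; apply/andP; split; lra.
have mn (a b : R) : 0 <= a <= 1 -> 0 <= b <= 1 -> 0 <= Num.min a b <= 1.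
  by move=> /andP[? ?] /andP[? ?]; have [h|h] := leP a b; apply/andP; split; lra.
apply: (mx); (apply: (big_ind (fun u => 0 <= u <= 1)); [by rewrite lexx ler01| by move=> ? ? h1 h2; exact: (mx _ _ h1 h2)| ];
  move=> i _; apply: (big_ind (fun u => 0 <= u <= 1)); [by rewrite lexx ler01| by move=> ? ? h1 h2; exact: (mn _ _ h1 h2)| by []]).
Qed.

Variables (Sigma X : Type) (beta : prechart Sigma X).

Lemma Phi_close k (d d' : X -> X -> R) : 0 <= k ->
  (forall x y, close k (d x y) (d' x y)) ->
  forall x y, close (k / 2) (Phi beta d x y) (Phi beta d' x y).
Proof.
move=> k0 h x y; rewrite /Phi; apply: close_haus; first lra.
exact: lift_close.
Qed.

Lemma Phi_mono (d d' : X -> X -> R) : (forall x y, d x y <= d' x y) ->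
  forall x y, Phi beta d x y <= Phi beta d' x y.
Proof. by move=> h x y; apply: mono_haus; apply: lift_mono. Qed.

Lemma Phi_bnd (d : X -> X -> R) : bnd d -> bnd (Phi beta d).
Proof. by move=> h x y; apply: haus_bnd; apply: lift_bnd. Qed.

Lemma Phi_tri (d : X -> X -> R) : bnd d -> tri d -> tri (Phi beta d).
Proof.
move=> hb ht x y z; apply: haus_tri; last exact: lift_tri.
by move=> m n; have /andP[] := lift_bnd hb m n.
Qed.

Lemma Phi_sym (d : X -> X -> R) x y : Phi beta d x y = Phi beta d y x.
Proof. by rewrite /Phi /hausdorff maxC. Qed.

Lemma Phi_diag (d : X -> X -> R) : bnd d -> (forall x, d x x = 0) ->
  forall x, Phi beta d x x = 0.
Proof.
move=> hb hd x; rewrite /Phi /hausdorff maxxx.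
apply/eqP; rewrite eq_le bigmax_ge0 andbT; apply: bigmax_lub => // m hm /=.
apply: (le_trans (bigmin_le (fun b => lift_pm d m b) hm)).
case: m {hm} => [[a z]|v] /=; case: pselect => //= _; rewrite ?hd; lra.
Qed.

Definition Pi (i : nat) : X -> X -> R := @Phi_iter R Sigma X beta i.

Lemma disc_bnd : bnd (@discrete_pm R X).
Proof. by move=> x y; rewrite /discrete_pm; case: pselect => _ /=; rewrite lexx ?ler01. Qed.

Lemma disc_tri : tri (@discrete_pm R X).
Proof.
move=> x y z; rewrite /discrete_pm.
repeat (case: pselect => ? /=; subst); try congruence; lra.
Qed.

Lemma disc_diag x : @discrete_pm R X x x = 0.
Proof. by rewrite /discrete_pm; case: pselect. Qed.

Lemma Pi_bnd i : bnd (Pi i).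
Proof. elim: i => [|i IH]; [exact: disc_bnd| exact: Phi_bnd]. Qed.

Lemma Pi_tri i : tri (Pi i).
Proof. elim: i => [|i IH]; [exact: disc_tri| exact: Phi_tri (Pi_bnd i) IH]. Qed.

Lemma Pi_diag i x : Pi i x x = 0.
Proof. elim: i x => [|i IH] x; [exact: disc_diag| exact: (Phi_diag (Pi_bnd i) IH x)]. Qed.

Lemma Pi_sym i x y : Pi i x y = Pi i y x.
Proof.
case: i => [|i]; last exact: Phi_sym.
rewrite /Pi /Phi_iter /= /discrete_pm.
by repeat (case: pselect => ? /=; subst); try congruence.
Qed.

Lemma Pi_dec1 i x y : Pi i.+1 x y <= Pi i x y.
Proof.
elim: i x y => [|i IH] x y.
  rewrite {2}/Pi /Phi_iter /= /discrete_pm; case: pselect => [e|_] /=; first subst y.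
    by rewrite (Phi_diag disc_bnd disc_diag).
  by have /andP[] := Phi_bnd disc_bnd x y.
exact: Phi_mono.
Qed.

Lemma Pi_dec i k x y : Pi (k + i)%N x y <= Pi i x y.
Proof.
elim: k => [|k IH] //; rewrite addSn; exact: (le_trans (Pi_dec1 _ _ _) IH).
Qed.

Lemma iter_close n (d d' : X -> X -> R) : bnd d -> bnd d' ->
  forall x y, close (g n) (iter n (Phi beta) d x y) (iter n (Phi beta) d' x y).
Proof.
move=> hd hd'; elim: n => [|n IH] x y /=.
  rewrite /g expr0 invr1; have /andP[? ?] := hd x y; have /andP[? ?] := hd' x y; split; lra.
rewrite gS; apply: Phi_close => //; exact: g_ge0.
Qed.

Lemma Pi_cauchy i k x y : close (g i) (Pi (i + k)%N x y) (Pi i x y).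
Proof.
rewrite /Pi /Phi_iter iterD; apply: iter_close => //; [exact: Pi_bnd| exact: disc_bnd].
Qed.

Definition L (x y : X) : R := inf (range (fun i => Pi i x y)).

Lemma L_le i x y : L x y <= Pi i x y.
Proof.
apply: ge_inf; last first.
  by exists i.
exists 0 => _ [j _ <-].
by have /andP[] := Pi_bnd j x y.
Qed.

Lemma L_ge i x y : Pi i x y - g i <= L x y.
Proof.
apply: lb_le_inf; first by exists (Pi 0 x y), 0%N.
move=> _ [j _ <-].
have [hij|hji] := leqP i j.
  rewrite -(subnKC hij); have [h1 h2] := Pi_cauchy i (j - i)%N x y; lra.
have := Pi_dec j (i - j)%N x y; rewrite subnK; last exact: ltnW.
move=> h.
have := g_ge0 i; lra.
Qed.

Lemma L_close i x y : close (g i) (Pi i x y) (L x y).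
Proof. have := L_le i x y; have := L_ge i x y; have := g_ge0 i; split; lra. Qed.

Lemma L_bnd : bnd L.
Proof.
move=> x y; apply/andP; split.
  apply: lb_le_inf; first by exists (Pi 0 x y), 0%N.
  by move=> _ [j _ <-]; have /andP[] := Pi_bnd j x y.
by apply: (le_trans (L_le 0 x y)); have /andP[] := Pi_bnd 0 x y.
Qed.

Lemma L_fix : Phi beta L = L.
Proof.
apply/funext => x; apply/funext => y.
have key : forall i, close (g i) (Phi beta L x y) (L x y).
  move=> i.
  have [a1 a2] := Phi_close (g_ge0 i) (fun x y => L_close i x y) x y.
  have [b1 b2] := L_close i.+1 x y.
  rewrite gS in b1 b2.
  change (Phi beta (Pi i) x y) with (Pi i.+1 x y) in a1.
  change (Phi beta (Pi i) x y) with (Pi i.+1 x y) in a2.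
  split; lra.
apply/eqP; rewrite eq_le; apply/andP; split.
  have : Phi beta L x y - L x y <= 0 by apply: geo => i; case: (key i).
  lra.
have : L x y - Phi beta L x y <= 0 by apply: geo => i; case: (key i).
lra.
Qed.

Lemma L_pm : is_pmetric L.
Proof.
split.
- exact: L_bnd.
- move=> x; apply/eqP; rewrite eq_le; apply/andP; split.
    by have := L_le 0 x x; rewrite Pi_diag.
  by have /andP[] := L_bnd x x.
- move=> x y; rewrite /L.
  have -> : (fun i => Pi i x y) = (fun i => Pi i y x) by apply/funext => i; exact: Pi_sym.
  by [].
- move=> x y z.
  have : (L x z - L x y - L y z) / 2 <= 0.
    apply: geo => i.
    have := L_le i x z; have := L_ge i x y; have := L_ge i y z.
    have := Pi_tri i x y z; lra.
  lra.
Qed.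

Lemma fix_unique (d d' : X -> X -> R) : bnd d -> bnd d' ->
  Phi beta d = d -> Phi beta d' = d' -> forall x y, d x y = d' x y.
Proof.
move=> hb hb' hf hf' x y.
have key : forall n, close (g n) (d x y) (d' x y).
  move=> n; have := iter_close n hb hb' x y.
  have -> : iter n (Phi beta) d = d by elim: n => //= n ->.
  by have -> : iter n (Phi beta) d' = d' by elim: n => //= n ->.
apply/eqP; rewrite eq_le; apply/andP; split.
  have : d x y - d' x y <= 0 by apply: geo => i; case: (key i).
  lra.
have : d' x y - d x y <= 0 by apply: geo => i; case: (key i).
lra.
Qed.

End M.

Theorem mainTheorem5 (R : realType) (Sigma X : Type) (beta : prechart Sigma X) :
  locally_finite beta ->
  (exists bd : X -> X -> R, is_bd beta bd) /\
  (forall bd : X -> X -> R, is_bd beta bd ->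
     forall x y : X, bd x y = inf (range (fun i : nat => @Phi_iter R Sigma X beta i x y))).
Proof.
move=> _; split.
  exists (@L R Sigma X beta); split; [exact: L_pm| exact: L_fix|].
  move=> d' [hb' _ _ _] hf' x y.
  have [hb _ _ _] := @L_pm R Sigma X beta.
  by rewrite (fix_unique hb hb' (@L_fix R Sigma X beta) hf').
move=> bd [[hb _ _ _] hf _] x y.
have [hb' _ _ _] := @L_pm R Sigma X beta.
exact: (fix_unique hb hb' hf (@L_fix R Sigma X beta)).
Qed.
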